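(* Let $s\in\mathbb N$, $D>0$, and let $g_1,\dots,g_s$ be measurable functions on $[0,1]$ with $|g_i(x)|\le D$ for all $i$ and $x\in[0,1]$, such that $$\max_{\theta}\Big|\int_0^1\prod_{i=1}^s\Big(\frac{g_i(x)}{D}\Big)^{\theta_i}dx\Big|<2^{-s},$$ where the maximum is over all $\theta=(\theta_i)_{i=1}^s\in\{0,1\}^s$ with $\theta\neq(0,\dots,0)$. Then there exist measurable functions $h_1,\dots,h_s$ on $[0,2]$ such that $h_i=g_i$ on $[0,1]$, $|h_i(x)|\le D$ for all $x\in[0,2]$, and $\{h_i\}_{i=1}^s$ is multiplicative on $[0,2]$, i.e. $\int_0^2 h_{i_1}(x)\cdots h_{i_k}(x)\,dx=0$ for every $k\ge1$ and all $1\le i_1<\dots<i_k\le s$. *)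

(* Defs.v *)
From HB Require Import structures.
From mathcomp Require Import all_boot all_order all_algebra.
From mathcomp Require Import all_classical all_reals all_analysis.

(* Main.v *)
Require Import Defs.
From HB Require Import structures.
From mathcomp Require Import all_boot all_order all_algebra.
From mathcomp Require Import all_classical all_reals all_analysis.
From mathcomp Require Import ring lra.
Import Order.TTheory GRing.Theory Num.Theory.
Local Open Scope classical_set_scope.
Local Open Scope ring_scope.
Set Implicit Arguments.
Unset Strict Implicit.

Section Pieces.
Variable R : realType.
Variable w : nat -> R.
Hypothesis w0 : forall k, 0 <= w k.
Definition W n := \sum_(0 <= j < n) w j.
Definition J k : set R := `]1 + W k, 1 + W k.+1]%classic.

Lemma W_ge0 n : 0 <= W n.
Proof. by apply: sumr_ge0 => i _. Qed.

Lemma WS n : W n.+1 = W n + w n.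
Proof. by rewrite /W big_nat_recr. Qed.

Lemma W_mono m n : (m <= n)%N -> W m <= W n.
Proof.
by move=> mn; rewrite /W (@big_cat_nat _ _ _ m 0 n _ _ (leq0n m) mn) lerDl; apply: sumr_ge0.
Qed.

Lemma J_disj i j : i != j -> J i `&` J j = set0.
Proof.
wlog ij : i j / (i < j)%N.
  move=> H ne; case: (ltngtP i j) => c; first exact: H.
  by rewrite setIC; apply: H; rewrite // eq_sym.
  by rewrite c eqxx in ne.
move=> _; apply/seteqP; split => x //=; rewrite /J /= !in_itv /=.
move=> [/andP[a b] /andP[c d]].
have := @W_mono i.+1 j ij; lra.
Qed.

Lemma J_union n : \big[setU/set0]_(k <- iota 0 n) J k = `]1, 1 + W n]%classic.
Proof.
elim: n => [|n IH].
  rewrite big_nil /W big_geq // addr0; apply/seteqP; split => x //=.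
  by rewrite in_itv /=; lra.
rewrite -[iota 0 n.+1]/(index_iota 0 n.+1) big_nat_recr //= -/(index_iota 0 n).
rewrite /index_iota subn0 IH.
apply/seteqP; split => x /=; rewrite /J /= !in_itv /= WS; have := W_ge0 n; have := w0 n.
  move=> ? ? [/andP[a b]|/andP[a b]]; apply/andP; split; lra.
move=> ? ? /andP[a b].
case: (lerP x (1 + W n)) => c; [left|right]; rewrite ?andbT ?andTb; try (apply/andP; split); lra.
Qed.

Lemma J_measure k : lebesgue_measure (J k) = (w k)%:E.
Proof.
rewrite /J lebesgue_measure_itv /= WS.
rewrite lte_fin; case: ltP => c.
  by rewrite -EFinD; congr EFin; ring.
have := w0 k; move: c; rewrite -subr_ge0 => c d.
congr EFin; lra.
Qed.

Lemma J_meas k : measurable (J k).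
Proof. exact: measurable_itv. Qed.

Lemma J_sub k n : (k < n)%N -> J k `<=` `]1, 1 + W n]%classic.
Proof.
move=> kn x; rewrite /J /= !in_itv /= => /andP[a b].
have := W_ge0 k; have := @W_mono k.+1 n kn.
rewrite ?andbT ?andTb; try (apply/andP; split); lra.
Qed.
End Pieces.

Section Fourier.
Variable R : realType.
Variable s : nat.
Definition sg (b : bool) : R := if b then -1 else 1.
Definition chi (S : {set 'I_s}) (e : {ffun 'I_s -> bool}) : R :=
  \prod_(i in S) sg (e i).

Lemma chi0 e : chi finset.set0 e = 1.
Proof. by rewrite /chi big_set0. Qed.

Lemma norm_chi S e : `|chi S e| = 1.
Proof.
rewrite /chi normr_prod; apply: big1 => i _.
by rewrite /sg; case: (e i); rewrite ?normrN normr1.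
Qed.

Lemma orth S T : \sum_e chi S e * chi T e = if S == T then 2 ^+ s else 0.
Proof.
pose F (i : 'I_s) (b : bool) : R :=
  (if i \in S then sg b else 1) * (if i \in T then sg b else 1).
transitivity (\sum_(e : {ffun 'I_s -> bool}) \prod_i F i (e i)).
  apply: eq_bigr => e _; rewrite /chi /F big_split /=.
  by rewrite [in RHS]big_mkcond [X in _ * X = _]big_mkcond /= [in LHS]big_mkcond.
rewrite -bigA_distr_bigA /=.
have HF i : \sum_(b : bool) F i b = if (i \in S) == (i \in T) then 2 else 0.
  rewrite big_bool /F /sg.
  by case: (i \in S); case: (i \in T) => /=; ring.
under eq_bigr do rewrite HF.
case: eqP => [<-|/eqP ne].
  rewrite (eq_bigr (fun _ => 2)); last by move=> i _; rewrite eqxx.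
  by rewrite prodr_const card_ord.
have [i hi] : exists i, (i \in S) != (i \in T).
  apply/existsP; apply: contraR ne; rewrite negb_exists => /forallP H.
  by apply/eqP/setP => i; have := H i; rewrite negbK => /eqP.
by rewrite (bigD1 i) //= (negbTE hi) mul0r.
Qed.

Variable a : {set 'I_s} -> R.
Definition wt e := (2 ^+ s)^-1 * \sum_S a S * chi S e.

Lemma wt_moment T : \sum_e chi T e * wt e = a T.
Proof.
rewrite /wt.
under eq_bigr do rewrite mulrCA big_distrr /=.

rewrite -mulr_sumr exchange_big /=.
under eq_bigr => S _ do under eq_bigr => e _ do rewrite mulrCA.
under eq_bigr do rewrite -mulr_sumr orth.
rewrite (bigD1 T) //= eqxx big1 ?addr0.
  by rewrite mulrCA mulVf ?mulr1 // expf_neq0.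
by move=> S /negbTE ST; rewrite eq_sym ST mulr0.
Qed.

Lemma card_sets : #|{set 'I_s}| = (2 ^ s)%N.
Proof. by rewrite -cardsT -powersetT card_powerset cardsT card_ord. Qed.

Lemma wt_ge0 : a finset.set0 = 1 -> (forall S, S != finset.set0 -> `|a S| <= (2 ^+ s)^-1) ->
  forall e, 0 <= wt e.
Proof.
move=> a0 aS e; rewrite /wt; apply: mulr_ge0; first by rewrite invr_ge0 exprn_ge0.
rewrite (bigD1 finset.set0) //= a0 chi0 mul1r.
have : \sum_(S : {set 'I_s} | S != finset.set0) (- (2 ^+ s)^-1) <= \sum_(S | S != finset.set0) a S * chi S e.
  apply: ler_sum => S hS; rewrite lerNl.
  apply: le_trans (aS S hS); apply: le_trans (ler_norm _) _.
  by rewrite normrN normrM norm_chi mulr1.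
have : \sum_(S : {set 'I_s}) (2 ^+ s : R)^-1 = 1.
  by rewrite sumr_const card_sets -[X in X = _]mulr_natr natrX mulVf // expf_neq0.
rewrite (bigD1 finset.set0) //= => H1 H2.
rewrite sumrN in H2.
have : 0 <= (2 ^+ s : R)^-1 by rewrite invr_ge0 exprn_ge0.
lra.
Qed.

End Fourier.

Lemma leb01_fin (R : realType) :
  (lebesgue_measure (`[(0:R)%R, (1:R)%R]%classic : set R) < +oo)%E.
Proof. by rewrite lebesgue_measure_itv /= lte01 -EFinD ltry. Qed.

Unset Implicit Arguments.
Set Strict Implicit.

Theorem lemma4p3 (R : realType) (s : nat) (D : R) (g : 'I_s -> R -> R) :
  0 < D ->
  (forall i, measurable_fun `[(0:R)%R, (1:R)%R]%classic (g i)) ->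
  (forall i x, x \in `[(0:R)%R, (1:R)%R]%classic -> `|g i x| <= D) ->
  (forall theta : 'I_s -> bool, (exists i, theta i) ->
     (`| \int[lebesgue_measure]_(x in `[(0:R)%R, (1:R)%R]%classic)
          ((\prod_(i < s) (g i x / D) ^+ theta i)%:E) | < ((2 ^- s)%:E))%E) ->
  exists h : 'I_s -> R -> R,
    [/\ (forall i, measurable_fun `[(0:R)%R, (2:R)%R]%classic (h i)),
        (forall i x, x \in `[(0:R)%R, (1:R)%R]%classic -> h i x = g i x),
        (forall i x, x \in `[(0:R)%R, (2:R)%R]%classic -> `|h i x| <= D) &
        (forall S : {set 'I_s}, S != finset.set0 ->
           (\int[lebesgue_measure]_(x in `[(0:R)%R, (2:R)%R]%classic)
              ((\prod_(i in S) h i x)%:E) = 0)%E)].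
Proof.
move=> D0 gm gb hth.
pose a (S : {set 'I_s}) : R := if S == finset.set0 then 1 else
  - fine (\int[lebesgue_measure]_(x in `[(0:R)%R, (1:R)%R]%classic)
          ((\prod_(i < s) (g i x / D) ^+ (i \in S))%:E))%E.
have a0 : a finset.set0 = 1 by rewrite /a eqxx.
have Ifin : forall S, S != finset.set0 ->
   (\int[lebesgue_measure]_(x in `[(0:R)%R, (1:R)%R]%classic)
          ((\prod_(i < s) (g i x / D) ^+ (i \in S))%:E))%E = (- a S)%:E /\
   `|a S| <= (2 ^+ s)^-1.
  move=> S S0.
  have ex : exists i, i \in S.
    by case/set0Pn: S0 => i iS; exists i.
  have := hth (fun i => i \in S) ex.
  rewrite /a (negbTE S0).
  case: (\int[_]_(_ in _) _)%E => [r| |] //= H.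
  by rewrite opprK; split => //; rewrite normrN; apply/ltW; rewrite -lte_fin.
have aS : forall S, S != finset.set0 -> `|a S| <= (2 ^+ s)^-1.
  by move=> S /Ifin [].
pose es := enum {ffun 'I_s -> bool}.
pose e0 : {ffun 'I_s -> bool} := [ffun => false].
pose ek k := nth e0 es k.
pose N := size es.
pose w k := wt a (ek k).
have w0 k : 0 <= w k by apply: wt_ge0.
have sumes (F : {ffun 'I_s -> bool} -> R) :
    \sum_(0 <= k < N) F (ek k) = \sum_e F e.
  rewrite -(big_nth e0 (r:=es) (fun _ => true) F).
  by rewrite /es big_enum.
have Wsum : W w N = 1.
  rewrite /W sumes -a0 -(wt_moment a finset.set0).
  by apply: eq_bigr => e _; rewrite chi0 mul1r.
have inI (x u v : R) : (x \in `[u, v]%classic) = (u <= x <= v).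
  by rewrite mem_setE in_itv.
have Jgt1 k x : J w k x -> 1 < x.
  by rewrite /J /= in_itv /= => /andP[+ _]; have := W_ge0 w0 k; lra.
have Jle2 k x : (k < N)%N -> J w k x -> x <= 2.
  move=> kN /(J_sub w0 kN) /=; rewrite in_itv /= Wsum; lra.
pose c k (i : 'I_s) : R := D * sg R (ek k i).
pose h (i : 'I_s) (x : R) : R := (if x \in `[(0:R)%R, (1:R)%R]%classic then g i x else 0) +
   \sum_(0 <= k < N) \1_(J w k) x * c k i.
have hJ i k x : (k < N)%N -> J w k x -> h i x = c k i.
  move=> kN Jx; rewrite /h inI.
  have -> : (0 <= x <= 1) = false by have := Jgt1 _ _ Jx; lra.
  rewrite add0r (bigD1_seq k) ?mem_index_iota ?iota_uniq //= big1_seq ?addr0.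
    by rewrite indicE mem_set // mul1r.
  move=> j /andP[jk _]; rewrite indicE memNset ?mul0r //.
  move=> Jjx; have := J_disj w0 jk; rewrite -/(J w j) => /seteqP[+ _].
  by move=> /(_ x) /=; apply.
have h01 i x : x \in `[(0:R)%R, (1:R)%R]%classic -> h i x = g i x.
  move=> x01; rewrite /h x01 big1 ?addr0 // => k _.
  rewrite indicE memNset ?mul0r // => /Jgt1; move: x01; rewrite inI; lra.
have hout i x : ~~ (x \in `[(0:R)%R, (1:R)%R]%classic) ->
    (forall k, (k < N)%N -> ~ J w k x) -> h i x = 0.
  move=> x01 nJ; rewrite /h (negbTE x01) add0r big_nat big1 // => k /andP[_ kN].
  by rewrite indicE memNset ?mul0r //; apply: nJ.
have U02 : `[(0:R)%R, (2:R)%R]%classic = `[(0:R)%R, (1:R)%R]%classic `|` `](1:R)%R, (2:R)%R]%classic.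
  apply/seteqP; split => x /=; rewrite !in_itv /=.
    by move=> /andP[xa xb]; case: (lerP x 1) => xc; [left|right]; rewrite ?andbT ?andTb; try (apply/andP; split); lra.
  by move=> [/andP[xa xb]|/andP[xa xb]]; rewrite ?andbT ?andTb; try (apply/andP; split); lra.
have hm i : measurable_fun `[(0:R)%R, (2:R)%R]%classic (h i).
  apply: measurable_realfun.measurable_funD.
    rewrite U02; apply/measurable_funU; [exact: measurable_itv|exact: measurable_itv|split].
      by apply: eq_measurable_fun (gm i) => x x01; rewrite x01.
    apply: eq_measurable_fun (measurable_cst (0:R)) => x.
    rewrite !mem_setE !in_itv /= => /andP[xa xb].
    by have -> : (0 <= x <= 1) = false by lra.
  apply: measurable_sum => k; apply: measurable_realfun.measurable_funM.
    by apply: measurable_realfun.measurable_indic; exact: measurable_itv.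
  exact: measurable_cst.
exists h; split => //.
- move=> i x; rewrite inI => /andP[x0 x2].
  case: (boolP (x \in `[(0:R)%R, (1:R)%R]%classic)) => x01.
    by rewrite h01 // gb.
  have [[k [kN Jx]]|nJ] := pselect (exists k, (k < N)%N /\ J w k x).
    rewrite (hJ _ _ _ kN Jx) /c normrM /sg.
    by case: (ek k i); rewrite ?normrN normr1 mulr1 ger0_norm // ltW.
  rewrite (hout i x x01); first by rewrite normr0 ltW.
  by move=> k kN Jx; apply: nJ; exists k.
move=> S S0.
have fm : measurable_fun `[(0:R)%R, (2:R)%R]%classic (fun x => \prod_(i in S) h i x).
  have -> : (fun x => \prod_(i in S) h i x) =
      (fun x => \prod_(i <- index_enum 'I_s) (if i \in S then h i x else 1)).
    by apply/funext => x; rewrite big_mkcond.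
  by apply: measurable_prod => i _; case: (i \in S); [exact: hm | exact: measurable_cst].
have U2 : `[(0:R)%R, (2:R)%R]%classic = `[(0:R)%R, (1:R)%R]%classic `|`
    \big[setU/set0]_(k <- index_iota 0 N) J w k.
  rewrite U02 /index_iota subn0 J_union // Wsum.
  by have -> : (1 + 1 : R) = 2 by ring.
have mU : measurable (\big[setU/set0]_(k <- index_iota 0 N) J w k).
  by apply: bigsetU_measurable => k _; exact: J_meas.
have Pm : measurable_fun `[(0:R)%R, (1:R)%R]%classic
    (fun x => \prod_(i < s) (g i x / D) ^+ (i \in S)).
  apply: measurable_prod => i _; apply: measurable_realfun.measurable_funX.
  by apply: measurable_realfun.measurable_funM => //; exact: measurable_cst.
have I1 : (\int[lebesgue_measure]_(x in `[(0:R)%R, (1:R)%R]%classic)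
     ((\prod_(i in S) h i x)%:E) = (- (D ^+ #|S| * a S))%:E)%E.
  transitivity (\int[lebesgue_measure]_(x in `[(0:R)%R, (1:R)%R]%classic)
     ((D ^+ #|S|)%:E * (\prod_(i < s) (g i x / D) ^+ (i \in S))%:E))%E.
    apply: eq_integral => x x01. rewrite -EFinM; congr EFin.
  rewrite (eq_bigr (fun i => g i x)); last by move=> i _; rewrite h01.
  rewrite [in RHS](eq_bigr (fun i => if i \in S then g i x / D else 1)); last first.
    by move=> i _; case: (i \in S); rewrite ?expr1 ?expr0.
  rewrite -big_mkcond /= prodf_div prodr_const mulrC divfK //.
  by rewrite expf_neq0 // gt_eqF.
  rewrite integralZl; [ | exact: measurable_itv | ].
    by rewrite (Ifin S S0).1 -EFinM mulrN.
  have mI : measurable (`[(0:R)%R, (1:R)%R]%classic : set R) by exact: measurable_itv.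
  eapply (measurable_bounded_integrable (mu:=lebesgue_measure) mI).
  - exact: leb01_fin.
  - exact: Pm.
  rewrite /bounded_near; near=> M => x x01 /=.
  apply: (@le_trans _ _ 1).
    rewrite normr_prod; apply: prodr_ile1 => i _; rewrite normr_ge0 /= normrX.
    apply: exprn_ile1 => //; rewrite normrM normfV (gtr0_norm D0) ler_pdivrMr // mul1r.
    by apply: gb; rewrite inE.
  near: M; exact: nbhs_pinfty_ge.
have piece k : (k < N)%N ->
   (\int[lebesgue_measure]_(x in J w k) ((\prod_(i in S) h i x)%:E) =
     ((D ^+ #|S| * chi R S (ek k)) * w k)%:E)%E.
  move=> kN.
  transitivity (\int[lebesgue_measure]_(x in J w k) (cst (D ^+ #|S| * chi R S (ek k))%:E x))%E; last first.
    rewrite integral_cst; last by rewrite /J; exact: measurable_itv.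
    transitivity ((D ^+ #|S| * chi R S (ek k))%:E * (w k)%:E)%E; last by [].
    congr (_ * _)%E; exact: J_measure.
  apply: eq_integral => x xJ; rewrite /= (eq_bigr (fun i => c k i)); last first.
    by move=> i _; rewrite (hJ _ k) //; move: xJ; rewrite mem_setE.
  by rewrite /c big_split prodr_const.
rewrite U2 integral_setU; first last.
- apply/disj_setPS => x [].
  rewrite /index_iota subn0 J_union // Wsum /= !in_itv /=; lra.
- by rewrite -U2; apply/measurable_realfun.measurable_EFinP.
- exact: mU.
- exact: measurable_itv.
rewrite integral_bigsetU_EFin; first last.
- apply: (measurable_funS (E := `[(0:R)%R, (2:R)%R]%classic)).
  + exact: measurable_itv.
  + by rewrite U2; exact: subsetUr.
  + exact/measurable_realfun.measurable_EFinP.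
- by apply/trivIsetP => i j _ _ ij; exact: J_disj.
- by rewrite /index_iota iota_uniq.
- by move=> k; rewrite /J; exact: measurable_itv.
rewrite I1 big_seq.
rewrite (eq_bigr (fun k => ((D ^+ #|S| * chi R S (ek k)) * w k)%:E)); last first.
  by move=> k kN; apply: piece; move: kN; rewrite mem_index_iota.
rewrite -big_seq sumEFin.
under eq_bigr do rewrite -mulrA.
rewrite -mulr_sumr (sumes (fun e => chi R S e * wt a e)) wt_moment.
by rewrite -EFinD addNr.
Unshelve. all: by end_near.
Qed.
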